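(* For any $\vec x,\vec y,\vec z,\vec w,\vec u,\vec v,\vec s,\vec t\in\Lambda_G$, $$\det\begin{pmatrix}\vec x\cdot\vec u&\vec x\cdot\vec v&\vec x\cdot\vec s&\vec x\cdot\vec t\\ \vec y\cdot\vec u&\vec y\cdot\vec v&\vec y\cdot\vec s&\vec y\cdot\vec t\\ \vec z\cdot\vec u&\vec z\cdot\vec v&\vec z\cdot\vec s&\vec z\cdot\vec t\\ \vec w\cdot\vec u&\vec w\cdot\vec v&\vec w\cdot\vec s&\vec w\cdot\vec t\end{pmatrix}=0\quad\text{in }\kappa G^\#.$$
   Context: Let $\kappa$ be a field of characteristic $0$ and $G$ a group. Let $*:\kappa G\to\kappa G$ be the $\kappa$-linear map with $g^*=g^{-1}$, $(\kappa G)^*$ its fixed points, and $A_G$ the quotient of $\kappa G$ by the two-sided ideal generated by all $ab-ba$, $a\in\kappa G$, $b\in(\kappa G)^*$; $*$ descends to $A_G$. Let $\kappa G^\#=\{x\in A_G:x^*=x\}$ and $\Lambda_G=\{x\in A_G:x^*=-x\}$. For $\vec x,\vec y\in\Lambda_G$ define $\vec x\cdot\vec y=-\tfrac12(\vec x\vec y+\vec y\vec x)\in\kappa G^\#$. *)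

(* Defs.v *)
From HB Require Import structures.
From mathcomp Require Import all_boot all_order all_algebra all_fingroup.
Set Implicit Arguments. Unset Strict Implicit. Unset Printing Implicit Defensive.
Import Order.TTheory GRing.Theory.
Local Open Scope ring_scope.

(* The group algebra kappa G of an arbitrary (possibly infinite) group G
   (a MathComp [groupType], i.e. a group with decidable equality and choice),
   with elements represented by formal finite sums  sum_i c_i g_i  given as
   lists of pairs (c_i, g_i).  Two formal sums denote the same element of
   kappa G iff they have the same coefficient function ([kg_eq]). *)
Section GroupAlgebra.
Variables (K : fieldType) (G : groupType).

Definition KG := seq (K * G).

Definition coef (a : KG) (g : G) : K := \sum_(p <- a | p.2 == g) p.1.
Definition kg_eq (a b : KG) : Prop := forall g, coef a g = coef b g.

Definition kg_one : KG := [:: (1, 1%g)].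
Definition kg_add (a b : KG) : KG := a ++ b.
Definition kg_scale (c : K) (a : KG) : KG := [seq (c * p.1, p.2) | p <- a].
Definition kg_opp (a : KG) : KG := kg_scale (-1) a.
Definition kg_sub (a b : KG) : KG := kg_add a (kg_opp b).
Definition kg_mul (a b : KG) : KG :=
  [seq (p.1 * q.1, (p.2 * q.2)%g) | p <- a, q <- b].
Definition kg_star (a : KG) : KG := [seq (p.1, (p.2)^-1%g) | p <- a].

(* [inI r] : r lies in the two-sided ideal I of kappa G generated by all
   a b - b a with a in kappa G and b in (kappa G)^* (i.e. b^* = b):
   r is a finite sum of terms p (a b - b a) q. *)
Definition inI (r : KG) : Prop :=
  exists l : seq (KG * KG * KG * KG),
    (forall t, t \in l -> kg_eq (kg_star t.1.2) t.1.2) /\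
    kg_eq r (flatten [seq kg_mul (kg_mul t.1.1.1
                         (kg_sub (kg_mul t.1.1.2 t.1.2) (kg_mul t.1.2 t.1.1.2)))
                         t.2 | t <- l]).

(* equality in A_G = kappa G / I *)
Definition congI (a b : KG) : Prop := inI (kg_sub a b).

(* x (a representative in kappa G) defines an element of Lambda_G *)
Definition inLambda (x : KG) : Prop := congI (kg_star x) (kg_opp x).

Definition kg_dot (x y : KG) : KG :=
  kg_scale (- (1 / 2%:R)) (kg_add (kg_mul x y) (kg_mul y x)).

(* Leibniz determinant of a 4x4 array of elements, products taken in row order *)
Definition kg_det4 (M : 'I_4 -> 'I_4 -> KG) : KG :=
  flatten [seq kg_scale ((-1) ^+ odd_perm s) (\big[kg_mul/kg_one]_(i < 4) M i (s i))
          | s : 'S_4 <- enum [set: 'S_4]].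

End GroupAlgebra.

(* Main.v *)
Require Import Defs.
From HB Require Import structures.
From mathcomp Require Import all_boot all_order all_algebra all_fingroup.
From mathcomp Require boolp.
From mathcomp Require Import ring.
Import GRing.Theory.
Local Open Scope ring_scope.

Module Aux.
Set Implicit Arguments. Unset Strict Implicit. Unset Printing Implicit Defensive.
Local Open Scope quotient_scope.
Local Open Scope ring_scope.

Record qrdata (T : choiceType) := QRData {
  E : T -> T -> Prop;
  z : T; o : T -> T; ad : T -> T -> T; u : T; mu : T -> T -> T;
  Erefl : forall a, E a a;
  Esym : forall a b, E a b -> E b a;
  Etrans : forall a b c, E a b -> E b c -> E a c;
  oE : forall a a', E a a' -> E (o a) (o a');
  adE : forall a a' b b', E a a' -> E b b' -> E (ad a b) (ad a' b');
  muE : forall a a' b b', E a a' -> E b b' -> E (mu a b) (mu a' b');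
  adA : forall a b c, E (ad (ad a b) c) (ad a (ad b c));
  adC : forall a b, E (ad a b) (ad b a);
  ad0 : forall a, E (ad z a) a;
  adN : forall a, E (ad (o a) a) z;
  muA : forall a b c, E (mu (mu a b) c) (mu a (mu b c));
  mu1 : forall a, E (mu u a) a;
  mur1 : forall a, E (mu a u) a;
  muDl : forall a b c, E (mu (ad a b) c) (ad (mu a c) (mu b c));
  muDr : forall a b c, E (mu a (ad b c)) (ad (mu a b) (mu a c))
}.

Section QR.
Variables (T : choiceType) (d : qrdata T).
Local Notation E := (E d). Local Notation z := (z d). Local Notation o := (o d).
Local Notation ad := (ad d). Local Notation u := (u d). Local Notation mu := (mu d).
Local Notation Erefl := (@Erefl _ d). Local Notation Esym := (@Esym _ d).
Local Notation Etrans := (@Etrans _ d). Local Notation oE := (@oE _ d).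
Local Notation adE := (@adE _ d). Local Notation muE := (@muE _ d).
Local Notation adA := (@adA _ d). Local Notation adC := (@adC _ d).
Local Notation ad0 := (@ad0 _ d). Local Notation adN := (@adN _ d).
Local Notation muA := (@muA _ d). Local Notation mu1 := (@mu1 _ d).
Local Notation mur1 := (@mur1 _ d). Local Notation muDl := (@muDl _ d).
Local Notation muDr := (@muDr _ d).

Definition eb (a b : T) : bool := boolp.asbool (E a b).
Lemma eb_equiv : equiv_class_of eb.
Proof.
split=> [a|a b|b a c]; rewrite /eb.
- by apply/boolp.asboolP; apply: Erefl.
- by apply/boolp.asboolP/boolp.asboolP; apply: Esym.
- by move=> /boolp.asboolP h1 /boolp.asboolP h2; apply/boolp.asboolP; apply: Etrans h1 h2.
Qed.
Canonical eb_equiv_rel := EquivRelPack eb_equiv.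
Canonical eb_encModRel := defaultEncModRel eb.
Definition Qt := {eq_quot eb}.
HB.instance Definition _ : EqQuotient T eb Qt := EqQuotient.on Qt.
HB.instance Definition _ := Choice.on Qt.
Notation QP := (@generic_quotient.pi _ Qt).
Notation qrepr := (@generic_quotient.repr _ Qt).
Definition qpi (a : T) : Qt := QP a.
Lemma piK x : qpi (qrepr x) = x. Proof. exact: generic_quotient.reprK. Qed.


Lemma piP a b : (qpi a = qpi b) <-> E a b.
Proof. split; [by move/eqquotP/boolp.asboolP | by move=> h; apply/eqquotP/boolp.asboolP]. Qed.

Lemma reprE a : E (qrepr (qpi a)) a.
Proof. by apply/piP; rewrite piK. Qed.

Definition qzero : Qt := lift_cst Qt z.
Definition qadd := lift_op2 Qt ad.
Definition qopp := lift_op1 Qt o.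
Definition qone : Qt := lift_cst Qt u.
Definition qmul := lift_op2 Qt mu.

Lemma pi_zero : qpi z = qzero. Proof. by unlock qzero. Qed.
Lemma pi_one : qpi u = qone. Proof. by unlock qone. Qed.
Lemma pi_opp a : qpi (o a) = qopp (qpi a).
Proof. by unlock qopp; apply/piP; apply: oE; apply: Esym; apply: reprE. Qed.
Lemma pi_add a b : qpi (ad a b) = qadd (qpi a) (qpi b).
Proof. by unlock qadd; apply/piP; apply: adE; apply: Esym; apply: reprE. Qed.
Lemma pi_mul a b : qpi (mu a b) = qmul (qpi a) (qpi b).
Proof. by unlock qmul; apply/piP; apply: muE; apply: Esym; apply: reprE. Qed.

Lemma qaddA : associative qadd.
Proof. by move=> a b c; rewrite -[a]piK -[b]piK -[c]piK -!pi_add; apply/piP; first [apply: adA | apply: Esym; apply: adA]. Qed.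
Lemma qaddC : commutative qadd.
Proof. by move=> a b; rewrite -[a]piK -[b]piK; rewrite -!pi_add; apply/piP; first [apply: adC | apply: Esym; apply: adC]. Qed.
Lemma qadd0 : left_id qzero qadd.
Proof. by move=> a; rewrite -[a]piK; rewrite -pi_zero -!pi_add; apply/piP; first [apply: ad0 | apply: Esym; apply: ad0]. Qed.
Lemma qaddN : left_inverse qzero qopp qadd.
Proof. by move=> a; rewrite -[a]piK; rewrite -pi_zero -pi_opp -!pi_add; apply/piP; first [apply: adN | apply: Esym; apply: adN]. Qed.
HB.instance Definition _ := GRing.isZmodule.Build Qt qaddA qaddC qadd0 qaddN.

Lemma qmulA : associative qmul.
Proof. by move=> a b c; rewrite -[a]piK -[b]piK -[c]piK; rewrite -!pi_mul; apply/piP; first [apply: muA | apply: Esym; apply: muA]. Qed.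
Lemma qmul1 : left_id qone qmul.
Proof. by move=> a; rewrite -[a]piK; rewrite -pi_one -!pi_mul; apply/piP; first [apply: mu1 | apply: Esym; apply: mu1]. Qed.
Lemma qmulr1 : right_id qone qmul.
Proof. by move=> a; rewrite -[a]piK; rewrite -pi_one -!pi_mul; apply/piP; first [apply: mur1 | apply: Esym; apply: mur1]. Qed.
Lemma qmulDl : left_distributive qmul qadd.
Proof. by move=> a b c; rewrite -[a]piK -[b]piK -[c]piK; rewrite -!pi_add -!pi_mul -pi_add; apply/piP; first [apply: muDl | apply: Esym; apply: muDl]. Qed.
Lemma qmulDr : right_distributive qmul qadd.
Proof. by move=> a b c; rewrite -[a]piK -[b]piK -[c]piK; rewrite -!pi_add -!pi_mul -pi_add; apply/piP; first [apply: muDr | apply: Esym; apply: muDr]. Qed.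
HB.instance Definition _ := GRing.Zmodule_isPzRing.Build Qt qmulA qmul1 qmulr1 qmulDl qmulDr.

Lemma piD a b : qpi (ad a b) = qpi a + qpi b. Proof. exact: pi_add. Qed.
Lemma piM a b : qpi (mu a b) = qpi a * qpi b. Proof. exact: pi_mul. Qed.
Lemma piN a : qpi (o a) = - qpi a. Proof. exact: pi_opp. Qed.
Lemma pi0 : qpi z = 0. Proof. exact: pi_zero. Qed.
Lemma pi1 : qpi u = 1. Proof. exact: pi_one. Qed.
Lemma piEq a b : (qpi a = qpi b) <-> E a b. Proof. exact: piP. Qed.
Lemma piW (P : Qt -> Prop) : (forall a, P (qpi a)) -> forall x, P x.
Proof. by move=> h; elim/quotW. Qed.
End QR.


Section KGlem.
Variables (K : fieldType) (G : groupType).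
Local Notation KGt := (KG K G).
Implicit Types a b c : KGt.

Lemma coefE a g : coef a g = \sum_(p <- a) (if p.2 == g then p.1 else 0).
Proof. by rewrite /coef big_mkcond. Qed.
Lemma coef_nil g : coef ([::] : KGt) g = 0.
Proof. by rewrite /coef big_nil. Qed.
Lemma coef_cat a b g : coef (a ++ b) g = coef a g + coef b g.
Proof. by rewrite /coef big_cat. Qed.
Lemma coef_add a b g : coef (kg_add a b) g = coef a g + coef b g.
Proof. exact: coef_cat. Qed.
Lemma coef_scale k a g : coef (kg_scale k a) g = k * coef a g.
Proof. by rewrite !coefE /kg_scale big_map mulr_sumr; apply: eq_bigr => p _ /=; case: eqP; rewrite ?mulr0. Qed.
Lemma coef_opp a g : coef (kg_opp a) g = - coef a g.
Proof. by rewrite coef_scale mulN1r. Qed.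
Lemma coef_sub a b g : coef (kg_sub a b) g = coef a g - coef b g.
Proof. by rewrite coef_add coef_opp. Qed.
Lemma coef_flatten (L : seq KGt) g : coef (flatten L) g = \sum_(r <- L) coef r g.
Proof. by elim: L => [|r L IH]; rewrite ?big_nil ?coef_nil //= coef_cat IH big_cons. Qed.

Lemma coef_mul a b g : coef (kg_mul a b) g =
  \sum_(p <- a) \sum_(q <- b) (if (p.2 * q.2 == g)%g then p.1 * q.1 else 0).
Proof.
rewrite /kg_mul coef_flatten big_map; apply: eq_bigr => p _.
by rewrite coefE big_map.
Qed.

Lemma coef_mulr a b g : coef (kg_mul a b) g = \sum_(q <- b) coef a (g * q.2^-1)%g * q.1.
Proof.
rewrite coef_mul exchange_big; apply: eq_bigr => q _.
rewrite coefE mulr_suml; apply: eq_bigr => p _.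
have -> : (p.2 * q.2 == g)%g = (p.2 == g * q.2^-1)%g.
  by apply/eqP/eqP => [<-|->]; rewrite ?mulgK ?mulgVK.
by case: eqP; rewrite ?mul0r.
Qed.

Lemma coef_mull a b g : coef (kg_mul a b) g = \sum_(p <- a) p.1 * coef b (p.2^-1 * g)%g.
Proof.
rewrite coef_mul; apply: eq_bigr => p _.
rewrite coefE mulr_sumr; apply: eq_bigr => q _.
have -> : (p.2 * q.2 == g)%g = (q.2 == p.2^-1 * g)%g.
  by apply/eqP/eqP => [<-|->]; rewrite ?mulKg ?mulVKg.
by case: eqP; rewrite ?mulr0.
Qed.

Lemma coef_star a g : coef (kg_star a) g = coef a g^-1%g.
Proof.
rewrite !coefE /kg_star big_map; apply: eq_bigr => p _ /=.
have -> : (p.2^-1 == g)%g = (p.2 == g^-1)%g.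
  by apply/eqP/eqP => [<-|->]; rewrite ?invgK.
by [].
Qed.

Lemma coef_single (k : K) (x : G) g : coef [:: (k, x)] g = if x == g then k else 0.
Proof. by rewrite coefE big_seq1. Qed.

Lemma coef_one g : coef (kg_one K G) g = if (1%g == g) then 1 else 0.
Proof. exact: coef_single. Qed.

Lemma kgeq_refl a : kg_eq a a. Proof. by []. Qed.
Lemma kgeq_sym a b : kg_eq a b -> kg_eq b a. Proof. by move=> h g. Qed.
Lemma kgeq_trans a b c : kg_eq a b -> kg_eq b c -> kg_eq a c.
Proof. by move=> h1 h2 g; rewrite h1 h2. Qed.

Lemma kgeq_opp a a' : kg_eq a a' -> kg_eq (kg_opp a) (kg_opp a').
Proof. by move=> h g; rewrite !coef_opp h. Qed.
Lemma kgeq_add a a' b b' : kg_eq a a' -> kg_eq b b' -> kg_eq (kg_add a b) (kg_add a' b').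
Proof. by move=> h1 h2 g; rewrite !coef_add h1 h2. Qed.
Lemma kgeq_mul a a' b b' : kg_eq a a' -> kg_eq b b' -> kg_eq (kg_mul a b) (kg_mul a' b').
Proof.
move=> h1 h2 g; rewrite coef_mulr.
under eq_bigr do rewrite h1.
rewrite -coef_mulr !coef_mull.
by apply: eq_bigr => p _; rewrite h2.
Qed.
Lemma kgeq_star a a' : kg_eq a a' -> kg_eq (kg_star a) (kg_star a').
Proof. by move=> h g; rewrite !coef_star h. Qed.

Lemma kg_addA a b c : kg_eq (kg_add (kg_add a b) c) (kg_add a (kg_add b c)).
Proof. by move=> g; rewrite !coef_add addrA. Qed.
Lemma kg_addC a b : kg_eq (kg_add a b) (kg_add b a).
Proof. by move=> g; rewrite !coef_add addrC. Qed.
Lemma kg_add0 a : kg_eq (kg_add [::] a) a.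
Proof. by move=> g; rewrite !coef_add coef_nil add0r. Qed.
Lemma kg_addN a : kg_eq (kg_add (kg_opp a) a) [::].
Proof. by move=> g; rewrite !coef_add coef_opp coef_nil addNr. Qed.

Lemma kg_mulA a b c : kg_eq (kg_mul (kg_mul a b) c) (kg_mul a (kg_mul b c)).
Proof.
move=> g; rewrite coef_mulr.
under eq_bigr do rewrite coef_mulr mulr_suml.
rewrite coef_mulr /kg_mul big_allpairs_dep /= exchange_big /=.
apply: eq_bigr => q _; apply: eq_bigr => r _.
by rewrite invgM mulgA mulrA.
Qed.

Lemma kg_mul1 a : kg_eq (kg_mul (kg_one K G) a) a.
Proof. by move=> g; rewrite coef_mull big_seq1 /= invg1 mul1g mul1r. Qed.
Lemma kg_mulr1 a : kg_eq (kg_mul a (kg_one K G)) a.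
Proof. by move=> g; rewrite coef_mulr big_seq1 /= invg1 mulg1 mulr1. Qed.
Lemma kg_mulDl a b c : kg_eq (kg_mul (kg_add a b) c) (kg_add (kg_mul a c) (kg_mul b c)).
Proof.
move=> g; rewrite coef_add !coef_mulr -big_split /=.
by apply: eq_bigr => q _; rewrite coef_add mulrDl.
Qed.
Lemma kg_mulDr a b c : kg_eq (kg_mul a (kg_add b c)) (kg_add (kg_mul a b) (kg_mul a c)).
Proof.
move=> g; rewrite coef_add !coef_mull -big_split /=.
by apply: eq_bigr => q _; rewrite coef_add mulrDr.
Qed.

Lemma kg_starM a b : kg_eq (kg_star (kg_mul a b)) (kg_mul (kg_star b) (kg_star a)).
Proof.
move=> g; rewrite coef_star coef_mulr coef_mull /kg_star big_map.
apply: eq_bigr => q _ /=; rewrite coef_star invMg !invgK mulrC.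
by [].
Qed.
Lemma kg_starK a : kg_eq (kg_star (kg_star a)) a.
Proof. by move=> g; rewrite !coef_star invgK. Qed.
Lemma kg_starD a b : kg_eq (kg_star (kg_add a b)) (kg_add (kg_star a) (kg_star b)).
Proof. by move=> g; rewrite !(coef_star, coef_add). Qed.
Lemma kg_starN a : kg_eq (kg_star (kg_opp a)) (kg_opp (kg_star a)).
Proof. by move=> g; rewrite !(coef_star, coef_opp). Qed.
Lemma kg_star1 : kg_eq (kg_star (kg_one K G)) (kg_one K G).
Proof. move=> g; rewrite coef_star !coef_one; congr (if _ then _ else _); apply/eqP/eqP => [h|<-]; [by rewrite -[g]invgK -h invg1 | by rewrite invg1]. Qed.

End KGlem.


Section A0sec.
Variables (K : fieldType) (G : groupType).
Local Notation KGt := (KG K G).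
Implicit Types a b c : KGt.

Definition kgdata : qrdata KGt :=
  @QRData KGt (@kg_eq K G) [::] (@kg_opp K G) (@kg_add K G) (kg_one K G) (@kg_mul K G)
    (@kgeq_refl K G) (@kgeq_sym K G) (@kgeq_trans K G) (@kgeq_opp K G) (@kgeq_add K G)
    (@kgeq_mul K G) (@kg_addA K G) (@kg_addC K G) (@kg_add0 K G) (@kg_addN K G)
    (@kg_mulA K G) (@kg_mul1 K G) (@kg_mulr1 K G) (@kg_mulDl K G) (@kg_mulDr K G).

Definition A0 := Qt kgdata.
Definition piA : KGt -> A0 := qpi kgdata.
Definition reprA (x : A0) : KGt := generic_quotient.repr x.

Lemma piA_add a b : piA (kg_add a b) = piA a + piA b. Proof. exact: piD. Qed.
Lemma piA_cat a b : piA (a ++ b) = piA a + piA b. Proof. exact: piD. Qed.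
Lemma piA_mul a b : piA (kg_mul a b) = piA a * piA b. Proof. exact: piM. Qed.
Lemma piA_opp a : piA (kg_opp a) = - piA a. Proof. exact: piN. Qed.
Lemma piA_sub a b : piA (kg_sub a b) = piA a - piA b. Proof. by rewrite piA_add piA_opp. Qed.
Lemma piA_nil : piA [::] = 0. Proof. exact: pi0. Qed.
Lemma piA_one : piA (kg_one K G) = 1. Proof. exact: pi1. Qed.
Lemma piA_eq a b : piA a = piA b <-> kg_eq a b. Proof. exact: piEq. Qed.
Lemma piAK x : piA (reprA x) = x. Proof. exact: piK. Qed.
Lemma piA_flatten (L : seq KGt) : piA (flatten L) = \sum_(r <- L) piA r.
Proof. by elim: L => [|r L IH]; rewrite ?big_nil ?piA_nil //= piA_cat IH big_cons. Qed.

Definition stA (x : A0) : A0 := piA (kg_star (reprA x)).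
Lemma stA_pi a : stA (piA a) = piA (kg_star a).
Proof. by apply/piA_eq; apply: kgeq_star; apply/piA_eq; rewrite piAK. Qed.

Lemma piAW (P : A0 -> Prop) : (forall a, P (piA a)) -> forall x, P x.
Proof. by move=> h x; rewrite -(piAK x). Qed.

Lemma stAD x y : stA (x + y) = stA x + stA y.
Proof.
elim/piAW: x => a; elim/piAW: y => b.
by rewrite -piA_add !stA_pi -piA_add; apply/piA_eq; apply: kg_starD.
Qed.
Lemma stAM x y : stA (x * y) = stA y * stA x.
Proof.
elim/piAW: x => a; elim/piAW: y => b.
by rewrite -piA_mul !stA_pi -piA_mul; apply/piA_eq; apply: kg_starM.
Qed.
Lemma stAK x : stA (stA x) = x.
Proof. by elim/piAW: x => a; rewrite !stA_pi; apply/piA_eq; apply: kg_starK. Qed.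
Lemma stA1 : stA 1 = 1.
Proof. by rewrite -piA_one stA_pi; apply/piA_eq; apply: kg_star1. Qed.
Lemma stA0 : stA 0 = 0.
Proof. by rewrite -piA_nil stA_pi. Qed.
Lemma stAN x : stA (- x) = - stA x.
Proof. by elim/piAW: x => a; rewrite -piA_opp !stA_pi -piA_opp; apply/piA_eq; apply: kg_starN. Qed.
Lemma stAB x y : stA (x - y) = stA x - stA y.
Proof. by rewrite stAD stAN. Qed.

Definition embA (k : K) : A0 := piA [:: (k, 1%g)].
Lemma embA_scale k a : piA (kg_scale k a) = embA k * piA a.
Proof.
rewrite -piA_mul; apply/piA_eq => g; rewrite coef_scale coef_mull big_seq1 /=.
by rewrite invg1 mul1g.
Qed.
Lemma embA_cen k x : embA k * x = x * embA k.
Proof.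
elim/piAW: x => a; rewrite -!piA_mul; apply/piA_eq => g.
by rewrite coef_mull coef_mulr !big_seq1 /= invg1 mul1g mulg1 mulrC.
Qed.
Lemma embA_add k l : embA (k + l) = embA k + embA l.
Proof. by rewrite -piA_cat; apply/piA_eq => g; rewrite coef_cat !coef_single; case: eqP; rewrite ?addr0. Qed.
Lemma embA_mul k l : embA (k * l) = embA k * embA l.
Proof. by rewrite -piA_mul; apply/piA_eq => g; rewrite coef_mull !big_seq1 /= coef_single invg1 mul1g coef_single; case: eqP; rewrite ?mulr0. Qed.
Lemma embA1 : embA 1 = 1.
Proof. by rewrite -piA_one. Qed.
Lemma embA_opp k : embA (- k) = - embA k.
Proof. by apply/eqP; rewrite -subr_eq0 opprK -embA_add addNr; apply/eqP; rewrite -piA_nil; apply/piA_eq => g; rewrite coef_single coef_nil; case: eqP. Qed.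
Lemma stA_emb k : stA (embA k) = embA k.
Proof. by rewrite /embA stA_pi /kg_star /= invg1. Qed.
Lemma embA_nat n : embA n%:R = n%:R.
Proof. elim: n => [|n IH]; first by rewrite !mulr0n -piA_nil; apply/piA_eq => g; rewrite coef_single coef_nil; case: eqP.
by rewrite -addn1 !natrD embA_add IH embA1. Qed.

End A0sec.


Section Bsec.
Variables (K : fieldType) (G : groupType).
Local Notation KGt := (KG K G).
Local Notation A0 := (A0 K G).
Local Notation piA := (@piA K G).
Local Notation stA := (@stA K G).

Definition gen (t : A0 * A0 * A0 * A0) : A0 :=
  t.1.1.1 * (t.1.1.2 * t.1.2 - t.1.2 * t.1.1.2) * t.2.
Definition I0 (x : A0) : Prop :=
  exists l : seq (A0 * A0 * A0 * A0),
    (forall t, t \in l -> stA t.1.2 = t.1.2) /\ x = \sum_(t <- l) gen t.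

Lemma I0_0 : I0 0.
Proof. by exists [::]; split => //; rewrite big_nil. Qed.
Lemma I0_D x y : I0 x -> I0 y -> I0 (x + y).
Proof.
move=> [l1 [h1 ->]] [l2 [h2 ->]]; exists (l1 ++ l2); split; last by rewrite big_cat.
by move=> t; rewrite mem_cat => /orP [/h1|/h2].
Qed.
Lemma I0_Ml c x : I0 x -> I0 (c * x).
Proof.
move=> [l [h ->]]; exists [seq ((c * t.1.1.1, t.1.1.2), t.1.2, t.2) | t <- l]; split.
  by move=> t /mapP [t0 /h ht ->].
by rewrite big_map mulr_sumr; apply: eq_bigr => t _; rewrite /gen /= !mulrA.
Qed.
Lemma I0_Mr c x : I0 x -> I0 (x * c).
Proof.
move=> [l [h ->]]; exists [seq (t.1.1.1, t.1.1.2, t.1.2, t.2 * c) | t <- l]; split.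
  by move=> t /mapP [t0 /h ht ->].
by rewrite big_map mulr_suml; apply: eq_bigr => t _; rewrite /gen /= !mulrA.
Qed.
Lemma I0_N x : I0 x -> I0 (- x).
Proof. by move=> h; rewrite -mulN1r; apply: I0_Ml. Qed.
Lemma I0_B x y : I0 x -> I0 y -> I0 (x - y).
Proof. by move=> hx hy; apply: I0_D => //; apply: I0_N. Qed.
Lemma I0_st x : I0 x -> I0 (stA x).
Proof.
move=> [l [h ->]].
exists [seq ((stA t.2, stA t.1.1.2), t.1.2, - stA t.1.1.1) | t <- l]; split.
  by move=> t /mapP [t0 /h ht ->].
rewrite big_map (big_morph stA (@stAD K G) (@stA0 K G)).
apply: eq_big_seq => t /h ht.
rewrite /gen /= !stAM stAB !stAM ht.
rewrite -mulrA; congr (_ * _).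
by rewrite [in RHS]mulrN -[in RHS]mulNr [in RHS]opprB.
Qed.

Lemma I0_eq x y : x = y -> I0 (x - y).
Proof. by move=> ->; rewrite subrr; exact: I0_0. Qed.


Definition kgF (t : KGt * KGt * KGt * KGt) : KGt :=
  kg_mul (kg_mul t.1.1.1 (kg_sub (kg_mul t.1.1.2 t.1.2) (kg_mul t.1.2 t.1.1.2))) t.2.

Lemma piA_kgF t : piA (kgF t) = gen (piA t.1.1.1, piA t.1.1.2, piA t.1.2, piA t.2).
Proof. by rewrite /kgF /gen /= !piA_mul piA_sub !piA_mul. Qed.

Lemma inI_I0 r : inI r -> I0 (piA r).
Proof.
move=> [l [hs heq]].
exists [seq (piA t.1.1.1, piA t.1.1.2, piA t.1.2, piA t.2) | t <- l]; split.
  move=> t /mapP [t0 /hs h0 ->] /=.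
  by rewrite stA_pi; apply/piA_eq.
move/piA_eq: heq => ->; rewrite piA_flatten !big_map.
by apply: eq_bigr => t _; rewrite -piA_kgF.
Qed.

Lemma I0_inI r : I0 (piA r) -> inI r.
Proof.
move=> [l [hs heq]].
exists [seq (reprA t.1.1.1, reprA t.1.1.2, reprA t.1.2, reprA t.2) | t <- l]; split.
  move=> t /mapP [t0 /hs h0 ->] /=.
  by apply/piA_eq; rewrite -stA_pi !piAK.
apply/piA_eq; rewrite heq piA_flatten !big_map.
by apply: eq_bigr => t _; rewrite (piA_kgF (reprA t.1.1.1, reprA t.1.1.2, reprA t.1.2, reprA t.2)) /= !piAK -!surjective_pairing.
Qed.
End Bsec.


Section Csec.
Variables (K : fieldType) (G : groupType).
Local Notation KGt := (KG K G).
Local Notation A0 := (A0 K G).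
Local Notation piA := (@piA K G).
Local Notation stA := (@stA K G).
Local Notation I0 := (@I0 K G).
Implicit Types a b c : A0.

Lemma QE_refl a : I0 (a - a). Proof. exact: I0_eq. Qed.
Lemma QE_sym a b : I0 (a - b) -> I0 (b - a). Proof. by move=> h; rewrite -opprB; apply: I0_N. Qed.
Lemma QE_trans a b c : I0 (a - b) -> I0 (b - c) -> I0 (a - c).
Proof. by move=> h1 h2; rewrite -(subrKA b); apply: I0_D. Qed.
Lemma QE_opp a a' : I0 (a - a') -> I0 (- a - - a').
Proof. by move=> h; rewrite -opprD; apply: I0_N. Qed.
Lemma QE_add a a' b b' : I0 (a - a') -> I0 (b - b') -> I0 ((a + b) - (a' + b')).
Proof. by move=> h1 h2; rewrite opprD addrACA; apply: I0_D. Qed.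
Lemma QE_mul a a' b b' : I0 (a - a') -> I0 (b - b') -> I0 ((a * b) - (a' * b')).
Proof.
move=> h1 h2; have -> : a * b - a' * b' = (a - a') * b + a' * (b - b').
  by rewrite mulrBl mulrBr addrA subrK.
by apply: I0_D; [apply: I0_Mr | apply: I0_Ml].
Qed.

Definition Qdata : qrdata A0 :=
  @QRData A0 (fun a b => I0 (a - b)) 0 (fun x => - x) +%R 1 *%R
    QE_refl QE_sym QE_trans QE_opp QE_add QE_mul
    (fun a b c => I0_eq (esym (addrA a b c)))
    (fun a b => I0_eq (addrC a b))
    (fun a => I0_eq (add0r a))
    (fun a => I0_eq (addNr a))
    (fun a b c => I0_eq (esym (mulrA a b c)))
    (fun a => I0_eq (mul1r a))
    (fun a => I0_eq (mulr1 a))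
    (fun a b c => I0_eq (mulrDl a b c))
    (fun a b c => I0_eq (mulrDr a b c)).

Definition Qr := Qt Qdata.
Definition piQ : A0 -> Qr := qpi Qdata.
Definition reprQ (x : Qr) : A0 := generic_quotient.repr x.
Lemma piQ_add a b : piQ (a + b) = piQ a + piQ b. Proof. exact: piD. Qed.
Lemma piQ_mul a b : piQ (a * b) = piQ a * piQ b. Proof. exact: piM. Qed.
Lemma piQ_opp a : piQ (- a) = - piQ a. Proof. exact: piN. Qed.
Lemma piQ0 : piQ 0 = 0. Proof. exact: pi0. Qed.
Lemma piQ1 : piQ 1 = 1. Proof. exact: pi1. Qed.
Lemma piQ_eq a b : piQ a = piQ b <-> I0 (a - b). Proof. exact: piEq. Qed.
Lemma piQK x : piQ (reprQ x) = x. Proof. exact: piK. Qed.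
Lemma piQW (P : Qr -> Prop) : (forall a, P (piQ a)) -> forall x, P x.
Proof. by move=> h x; rewrite -(piQK x). Qed.
Lemma piQ_sub a b : piQ (a - b) = piQ a - piQ b. Proof. by rewrite piQ_add piQ_opp. Qed.

Lemma piQ_nat n : piQ n%:R = n%:R.
Proof. by elim: n => [|n IH]; rewrite ?mulr0n ?piQ0 // -addn1 !natrD piQ_add IH piQ1. Qed.

Definition stQ (x : Qr) : Qr := piQ (stA (reprQ x)).
Lemma stQ_pi a : stQ (piQ a) = piQ (stA a).
Proof.
apply/piQ_eq; rewrite -stAB; apply: I0_st; apply/piQ_eq; exact: piQK.
Qed.

Lemma stQD x y : stQ (x + y) = stQ x + stQ y.
Proof. by elim/piQW: x => a; elim/piQW: y => b; rewrite -piQ_add !stQ_pi stAD piQ_add. Qed.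
Lemma stQM x y : stQ (x * y) = stQ y * stQ x.
Proof. by elim/piQW: x => a; elim/piQW: y => b; rewrite -piQ_mul !stQ_pi stAM piQ_mul. Qed.
Lemma stQK x : stQ (stQ x) = x.
Proof. by elim/piQW: x => a; rewrite !stQ_pi stAK. Qed.
Lemma stQ1 : stQ 1 = 1.
Proof. by rewrite -piQ1 stQ_pi stA1. Qed.

Definition embQ (k : K) : Qr := piQ (@embA K G k).

Hypothesis two_nz : (2%:R : K) != 0.

Lemma half2 : @embA K G (1 / 2%:R) * 2%:R = 1.
Proof. by rewrite -(@embA_nat K G) -(@embA_mul K G) mul1r mulVf // (@embA1 K G). Qed.

Lemma symQ x y : stQ x = x -> x * y = y * x.
Proof.
elim/piQW: x => a; elim/piQW: y => b; rewrite stQ_pi -!piQ_mul => /piQ_eq ha.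
apply/piQ_eq.
set h := @embA K G (1 / 2%:R).
set s := h * (a + stA a); set d := a - stA a.
have ea : a = s + h * d.
  rewrite /s /d -mulrDr addrACA subrr addr0 -mulr2n -mulr_natr mulrA.
  by rewrite /h (@embA_cen K G) -mulrA half2 mulr1.
have ss : stA s = s by rewrite /s stAM stAD stAK (@stA_emb K G) addrC (@embA_cen K G).
have Id : I0 d by rewrite /d -opprB; apply: I0_N.
clearbody s d; rewrite ea mulrDl mulrDr opprD addrACA; apply: I0_D.
  rewrite -opprB; apply: I0_N.
  exists [:: (1, b, s, 1)]; split; first by move=> t; rewrite inE => /eqP -> /=.
  by rewrite big_seq1 /gen /= mul1r mulr1.
apply: I0_B; first by apply: I0_Mr; apply: I0_Ml.
by apply: I0_Ml; apply: I0_Ml.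
Qed.

Lemma sthQ : stQ (embQ (1 / 2%:R)) = embQ (1 / 2%:R).
Proof. by rewrite /embQ stQ_pi (@stA_emb K G). Qed.
Lemma h2Q : embQ (1 / 2%:R) * 2%:R = 1.
Proof. by rewrite /embQ -piQ_nat -piQ_mul half2 piQ1. Qed.

End Csec.


Section Abs.
Variables (R : pzRingType) (st : R -> R).
Hypothesis stD : forall x y, st (x + y) = st x + st y.
Hypothesis stM : forall x y, st (x * y) = st y * st x.
Hypothesis stK : forall x, st (st x) = x.
Hypothesis st1 : st 1 = 1.
Hypothesis symC : forall x y, st x = x -> x * y = y * x.
Variable h : R.
Hypothesis h2 : h * 2%:R = 1.
Hypothesis sth : st h = h.

Lemma st0 : st 0 = 0.
Proof. have H := stD 0 0; rewrite addr0 in H; apply: (addrI (st 0)); by rewrite -H addr0. Qed.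
Lemma stN x : st (- x) = - st x.
Proof. by apply/eqP; rewrite -subr_eq0 opprK -stD addNr st0. Qed.
Lemma stB x y : st (x - y) = st x - st y.
Proof. by rewrite stD stN. Qed.
Lemma stn n : st n%:R = n%:R.
Proof. by elim: n => [|n IH]; rewrite ?st0 // -addn1 natrD stD IH st1. Qed.

Definition cen (c : R) := forall y, c * y = y * c.
Lemma hC : cen h. Proof. by move=> y; apply: symC. Qed.

Definition anti (x y : R) := x * y + y * x.
Definition com (x y : R) := x * y - y * x.
Definition lam (x : R) := st x = - x.
Definition dot (p q : R) := - (h * anti p q).
Definition crs (p q : R) := h * com p q.

Lemma com_mulr p q r : com p (q * r) = anti p q * r - q * anti p r.
Proof.
rewrite /com /anti mulrDl mulrDr !mulrA opprD addrA; congr (_ - _).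
by rewrite addrK.
Qed.

Lemma comBr p x y : com p (x - y) = com p x - com p y.
Proof. rewrite /com mulrBr mulrBl !opprB addrACA [RHS]addrACA; congr (_ + _); exact: addrC. Qed.

Lemma comCr p c x : cen c -> com p (c * x) = c * com p x.
Proof. by move=> cc; rewrite /com mulrBr mulrA -cc !mulrA. Qed.

Lemma anti_sym p q : lam p -> lam q -> st (anti p q) = anti p q.
Proof. by move=> lp lq; rewrite /anti stD !stM lp lq !mulrNN addrC. Qed.

Lemma anti_cen p q : lam p -> lam q -> cen (anti p q).
Proof. by move=> lp lq y; apply: symC; apply: anti_sym. Qed.

Lemma antiC p q : anti p q = anti q p.
Proof. by rewrite /anti addrC. Qed.

Lemma cenM a b : cen a -> cen b -> cen (a * b).
Proof. by move=> ca cb y; rewrite -mulrA cb mulrA ca mulrA. Qed.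
Lemma cenN a : cen a -> cen (- a).
Proof. by move=> ca y; rewrite mulNr mulrN ca. Qed.

Lemma dot_cen p q : lam p -> lam q -> cen (dot p q).
Proof. by move=> lp lq; apply/cenN/cenM; [exact: hC| exact: anti_cen]. Qed.

Lemma dot_sym p q : lam p -> lam q -> st (dot p q) = dot p q.
Proof. by move=> lp lq; rewrite /dot stN stM anti_sym // sth -hC. Qed.

Lemma crs_lam p q : lam p -> lam q -> lam (crs p q).
Proof.
move=> lp lq; rewrite /lam /crs /com stM stB !stM lp lq !mulrNN sth.
by rewrite -hC -opprB mulrN.
Qed.

Lemma hh2 : h * h * 2%:R = h.
Proof. by rewrite -mulrA h2 mulr1. Qed.

Lemma bac p q r : lam p -> lam q -> lam r ->
  crs p (crs q r) = dot p r * q - dot p q * r.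
Proof.
move=> lp lq lr; rewrite /crs comCr; last exact: hC.
have -> : com q r = q * r - r * q by [].
rewrite comBr !com_mulr.
rewrite -(anti_cen lp lr q) -(anti_cen lp lq r) /dot !mulNr -!mulrA.
set a := anti p q * r; set b := anti p r * q.
have -> : a - b - (b - a) = 2%:R * (a - b) by rewrite opprB mulr_natl mulr2n.
rewrite (mulrA h 2%:R) h2 mul1r.
by rewrite mulrBr opprK addrC.
Qed.

Lemma acl (a b c d : R) : a - b + (c - d) = a - d + (c - b).
Proof. rewrite addrACA [RHS]addrACA; congr (_ + _); exact: addrC. Qed.

Lemma acl2 (a b c d : R) : a + b = c + d -> a - d = c - b.
Proof. by move=> H; rewrite -(addrK b a) H addrAC addrK. Qed.

Lemma antiCl c x y : cen c -> anti (c * x) y = c * anti x y.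
Proof. by move=> cc; rewrite /anti mulrDr -!mulrA; congr (_ + _); rewrite !mulrA cc. Qed.
Lemma antiCr c x y : cen c -> anti x (c * y) = c * anti x y.
Proof. by move=> cc; rewrite antiC antiCl // antiC. Qed.

Lemma cyc0 p q r : lam p -> lam r -> anti (com p q) r = anti p (com q r).
Proof.
move=> lp lr; rewrite /anti /com !mulrBl !mulrBr !mulrA.
rewrite acl [RHS]acl; congr (_ + _).
apply: acl2.
have := anti_cen lr lp q; rewrite /anti mulrDl mulrDr !mulrA => ->.
by rewrite addrC.
Qed.

Lemma cyc p q r : lam p -> lam r -> dot (crs p q) r = dot p (crs q r).
Proof. by move=> lp lr; rewrite /dot /crs antiCl ?antiCr ?cyc0 //; exact: hC. Qed.

Lemma det4E (C : comPzRingType) (f : nat -> nat -> C) :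
  \det (\matrix_(i < 4, j < 4) f i j) =
  let a := f in
  a 0 0 * (a 1 1 * (a 2 2 * a 3 3 - a 2 3 * a 3 2) - a 1 2 * (a 2 1 * a 3 3 - a 2 3 * a 3 1) + a 1 3 * (a 2 1 * a 3 2 - a 2 2 * a 3 1))
 - a 0 1 * (a 1 0 * (a 2 2 * a 3 3 - a 2 3 * a 3 2) - a 1 2 * (a 2 0 * a 3 3 - a 2 3 * a 3 0) + a 1 3 * (a 2 0 * a 3 2 - a 2 2 * a 3 0))
 + a 0 2 * (a 1 0 * (a 2 1 * a 3 3 - a 2 3 * a 3 1) - a 1 1 * (a 2 0 * a 3 3 - a 2 3 * a 3 0) + a 1 3 * (a 2 0 * a 3 1 - a 2 1 * a 3 0))
 - a 0 3 * (a 1 0 * (a 2 1 * a 3 2 - a 2 2 * a 3 1) - a 1 1 * (a 2 0 * a 3 2 - a 2 2 * a 3 0) + a 1 2 * (a 2 0 * a 3 1 - a 2 1 * a 3 0)).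
Proof.
rewrite (expand_det_row _ 0) !big_ord_recr big_ord0 /= /cofactor.
rewrite !(expand_det_row _ 0) !big_ord_recr big_ord0 /= /cofactor.
rewrite !(expand_det_row _ 0) !big_ord_recr !big_ord0 /= /cofactor.
rewrite !det_mx11 !mxE /=.
ring.
Qed.

Definition symb (x : R) : bool := st x == x.
Record Cty := MkC { cval :> R; cvalP : symb cval }.
HB.instance Definition _ := [isSub for cval].
HB.instance Definition _ := [Choice of Cty by <:].

Lemma symb_subring : subring_closed symb.
Proof.
split; first by rewrite unfold_in /symb st1.
  by move=> x y; rewrite !unfold_in /symb => /eqP hx /eqP hy; rewrite stB hx hy.
move=> x y; rewrite !unfold_in /symb => /eqP hx /eqP hy; rewrite stM hx hy; apply/eqP; symmetry; exact: symC.
Qed.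
HB.instance Definition _ := GRing.SubChoice_isSubPzRing.Build R symb Cty symb_subring.

Lemma CmulC : commutative (@GRing.mul Cty).
Proof. move=> x y; apply: val_inj => /=; apply: symC; apply/eqP; exact: (cvalP x). Qed.
HB.instance Definition _ := GRing.PzRing_hasCommutativeMul.Build Cty CmulC.


Lemma antiDl x y z : anti (x + y) z = anti x z + anti y z.
Proof. by rewrite /anti mulrDl mulrDr addrACA. Qed.
Lemma antiNl x z : anti (- x) z = - anti x z.
Proof. by rewrite /anti mulNr mulrN opprD. Qed.

Lemma dotC p q : dot p q = dot q p.
Proof. by rewrite /dot antiC. Qed.
Lemma dot_Cl c x y : cen c -> dot (c * x) y = c * dot x y.
Proof. by move=> cc; rewrite /dot antiCl // mulrA (hC c) -mulrA mulrN. Qed.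
Lemma dot_Dl x y z : dot (x + y) z = dot x z + dot y z.
Proof. by rewrite /dot antiDl mulrDr opprD. Qed.
Lemma dot_Nl x z : dot (- x) z = - dot x z.
Proof. by rewrite /dot antiNl mulrN. Qed.
Lemma dot_Bl x y z : dot (x - y) z = dot x z - dot y z.
Proof. by rewrite dot_Dl dot_Nl. Qed.
Lemma crsC p q : crs p q = - crs q p.
Proof. by rewrite /crs /com -[RHS]mulrN opprB. Qed.

Lemma E1 x y z w b : lam x -> lam y -> lam z -> lam w -> lam b ->
  dot (crs x y) w * dot z b - dot (crs x y) z * dot w b =
  - (dot (crs z w) y * dot x b - dot (crs z w) x * dot y b).
Proof.
move=> lx ly lz lw lb.
have lA := crs_lam lx ly; have lB := crs_lam lz lw.
have e1 := bac lA lz lw; have e2 := bac lB lx ly.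
rewrite crsC e2 in e1.
have := congr1 (dot^~ b) e1.
by rewrite dot_Nl !dot_Bl (dot_Cl _ _ (dot_cen lA lw)) (dot_Cl _ _ (dot_cen lA lz)) (dot_Cl _ _ (dot_cen lB ly)) (dot_Cl _ _ (dot_cen lB lx)).
Qed.

Lemma BC p q u v : lam p -> lam q -> lam u -> lam v ->
  dot (crs p q) (crs u v) = dot q v * dot p u - dot q u * dot p v.
Proof.
move=> lp lq lu lv.
rewrite cyc //; last exact: crs_lam.
rewrite bac // dotC dot_Bl !dot_Cl; try exact: dot_cen.
by rewrite (dotC u) (dotC v).
Qed.

Definition dC (p q : R) : Cty := insubd (0 : Cty) (dot p q).
Lemma val_dC p q : lam p -> lam q -> val (dC p q) = dot p q.
Proof. by move=> lp lq; rewrite insubdK // unfold_in /symb dot_sym. Qed.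

Lemma cvalM (a b : Cty) : cval (a * b) = cval a * cval b. Proof. by []. Qed.
Lemma cval1 : cval (1 : Cty) = 1. Proof. by []. Qed.
Lemma cvalN (a : Cty) : cval (- a) = - cval a. Proof. by []. Qed.
Lemma cval_sign n : cval ((-1) ^+ n : Cty) = (-1) ^+ n.
Proof. by elim: n => [|n IH]; rewrite ?expr0 ?cval1 // !exprS cvalM IH cvalN cval1. Qed.
Lemma cval_prod (F : 'I_4 -> Cty) : cval (\prod_(i < 4) F i) = \prod_(i < 4) cval (F i).
Proof. exact: (big_morph cval cvalM cval1). Qed.

Lemma cval_dC p q : lam p -> lam q -> cval (dC p q) = dot p q.
Proof. exact: val_dC. Qed.

Lemma dCC p q : dC p q = dC q p.
Proof. by rewrite /dC dotC. Qed.

Lemma E1C x y z w b : lam x -> lam y -> lam z -> lam w -> lam b ->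
  dC (crs x y) w * dC z b - dC (crs x y) z * dC w b =
  - (dC (crs z w) y * dC x b - dC (crs z w) x * dC y b).
Proof.
move=> lx ly lz lw lb.
have lA := crs_lam lx ly; have lB := crs_lam lz lw.
apply: val_inj => /=; rewrite !val_dC //; exact: E1.
Qed.

Lemma BCC p q u v : lam p -> lam q -> lam u -> lam v ->
  dC (crs p q) (crs u v) = dC q v * dC p u - dC q u * dC p v.
Proof.
move=> lp lq lu lv.
have lA := crs_lam lp lq; have lB := crs_lam lu lv.
apply: val_inj => /=; rewrite !val_dC //; exact: BC.
Qed.

Lemma cycC p q r : lam p -> lam q -> lam r -> dC (crs p q) r = dC p (crs q r).
Proof.
move=> lp lq lr; rewrite /dC cyc //.
Qed.

Definition det3f (a11 a12 a13 a21 a22 a23 a31 a32 a33 : Cty) :=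
  a11 * (a22 * a33 - a23 * a32) - a12 * (a21 * a33 - a23 * a31)
  + a13 * (a21 * a32 - a22 * a31).

Lemma det3C p q r u v s : lam p -> lam q -> lam r -> lam u -> lam v -> lam s ->
  det3f (dC p u) (dC p v) (dC p s) (dC q u) (dC q v) (dC q s) (dC r u) (dC r v) (dC r s)
  = dC (crs p q) r * dC (crs u v) s.
Proof.
move=> lp lq lr lu lv ls.
have ln := crs_lam lp lq.
have e := E1C lu lv ls ln lr.
rewrite (BCC lu lv lp lq) in e.
rewrite (dCC (crs s _) v) -(cycC lv ls ln) (BCC lv ls lp lq) in e.
rewrite (dCC (crs s _) u) -(cycC lu ls ln) (BCC lu ls lp lq) in e.
rewrite /det3f.
rewrite (dCC v q) (dCC u p) (dCC v p) (dCC u q) (dCC s r) (dCC s q) (dCC s p) (dCC u r) (dCC v r) in e.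
move/eqP: e; rewrite -subr_eq0 => /eqP e.
apply/eqP; rewrite -subr_eq0 -e; apply/eqP.
ring.
Qed.

Theorem absmain x y z w u v s t :
  lam x -> lam y -> lam z -> lam w -> lam u -> lam v -> lam s -> lam t ->
  \det (\matrix_(i < 4, j < 4) dC (nth 0 [:: x; y; z; w] i) (nth 0 [:: u; v; s; t] j)) = 0.
Proof.
move=> lx ly lz lw lu lv ls lt.
rewrite (det4E (fun i j => dC (nth 0 [:: x; y; z; w] i) (nth 0 [:: u; v; s; t] j))) /=.
have e := E1C lx ly lz lw lu.
have t1 := det3C lx ly lw lv ls lt.
have t2 := det3C lx ly lz lv ls lt.
have t3 := det3C lz lw ly lv ls lt.
have t4 := det3C lz lw lx lv ls lt.
set T0 := dC (crs v s) t in t1 t2 t3 t4.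
transitivity (det3f (dC x v) (dC x s) (dC x t) (dC y v) (dC y s) (dC y t) (dC w v) (dC w s) (dC w t) * dC z u
  - det3f (dC x v) (dC x s) (dC x t) (dC y v) (dC y s) (dC y t) (dC z v) (dC z s) (dC z t) * dC w u
  + det3f (dC z v) (dC z s) (dC z t) (dC w v) (dC w s) (dC w t) (dC y v) (dC y s) (dC y t) * dC x u
  - det3f (dC z v) (dC z s) (dC z t) (dC w v) (dC w s) (dC w t) (dC x v) (dC x s) (dC x t) * dC y u).
  by rewrite /det3f; ring.
rewrite t1 t2 t3 t4.
move/eqP: e; rewrite -subr_eq0 => /eqP e.
rewrite -(mulr0 T0) -e; ring.
Qed.
End Abs.


Section Dsec.
Variables (K : fieldType) (G : groupType).
Local Notation KGt := (KG K G).
Local Notation Q := (Qr K G).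
Local Notation piA := (@piA K G).
Local Notation piQ := (@piQ K G).
Local Notation stQ := (@stQ K G).

Definition pp (a : KGt) : Q := piQ (piA a).

Lemma pp_nth (l : seq KGt) i : pp (nth [::] l i) = nth 0 (map pp l) i.
Proof.
elim: l i => [|a l IH] [|i] //=; by rewrite /pp piA_nil piQ0.
Qed.

Lemma lamQ a : inLambda a -> stQ (pp a) = - pp a.
Proof.
by move/inI_I0; rewrite piA_sub -stA_pi piA_opp => /piQ_eq; rewrite /pp stQ_pi piQ_opp.
Qed.

Lemma embQ_sign n : piQ (@embA K G ((-1) ^+ n)) = (-1) ^+ n.
Proof.
elim: n => [|n IH]; first by rewrite !expr0 embA1 piQ1.
by rewrite !exprS embA_mul piQ_mul IH embA_opp embA1 piQ_opp piQ1.
Qed.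

Lemma pp_dot a b : pp (kg_dot a b) = - (embQ G (1 / 2%:R) * (pp a * pp b + pp b * pp a)).
Proof.
rewrite /pp /kg_dot embA_scale piA_add !piA_mul piQ_mul embA_opp piQ_opp mulNr.
by rewrite piQ_add !piQ_mul.
Qed.



Lemma pp_dot' a b : piQ (piA (kg_dot a b)) = - (embQ G (1 / 2%:R) * (pp a * pp b + pp b * pp a)).
Proof. exact: pp_dot. Qed.
Lemma pp_nth' (l : seq KGt) i : piQ (piA (nth [::] l i)) = nth 0 (map pp l) i.
Proof. exact: pp_nth. Qed.

Lemma main_sec (hchar : [pchar K] =i pred0) (x y z w u v s t : KGt) :
  inLambda x -> inLambda y -> inLambda z -> inLambda w ->
  inLambda u -> inLambda v -> inLambda s -> inLambda t ->
  inI (kg_det4 (fun i j => kg_dot (nth [::] [:: x; y; z; w] i)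
                                  (nth [::] [:: u; v; s; t] j))).
Proof.
move=> /lamQ lx /lamQ ly /lamQ lz /lamQ lw /lamQ lu /lamQ lv /lamQ ls /lamQ lt.
have two_nz : (2%:R : K) != 0.
  by apply/negP => /eqP h2; have := hchar 2; rewrite !inE /= h2 eqxx.
pose h := embQ G (1 / (2%:R : K)).
have H := absmain (@stQD K G) (@stQM K G) (@stQ1 K G) (fun a b => @symQ K G two_nz a b)
  (h2Q G two_nz) (sthQ K G) lx ly lz lw lu lv ls lt.
have := congr1 val H; rewrite /determinant rmorph_sum /=.
have lam0 : lam stQ 0 by rewrite /lam oppr0 (st0 (@stQD K G)).
have lamX : forall i, lam stQ (nth 0 [:: pp x; pp y; pp z; pp w] i).
  by case=> [|[|[|[|i]]]] //=; rewrite nth_nil.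
have lamY : forall i, lam stQ (nth 0 [:: pp u; pp v; pp s; pp t] i).
  by case=> [|[|[|[|i]]]] //=; rewrite nth_nil.
under eq_bigr => sg _ do rewrite cval_sign cval_prod.
under eq_bigr => sg _ do under eq_bigr => i _ do rewrite mxE (cval_dC (@stQD K G) (@stQM K G) (@stQ1 K G) (fun a b => @symQ K G two_nz a b) (sthQ K G) (lamX i) (lamY _)).
move=> Hf.
apply: I0_inI; rewrite -[piA _]subr0; apply/piQ_eq; rewrite piQ0.
rewrite /kg_det4 piA_flatten big_map (big_morph piQ (@piQ_add K G) (@piQ0 K G)) big_enum /=.
under eq_bigl do rewrite in_setT.
rewrite -[RHS]Hf; apply: eq_bigr => sg _.
rewrite embA_scale piQ_mul embQ_sign (big_morph piA (@piA_mul K G) (@piA_one K G)).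
rewrite (big_morph piQ (@piQ_mul K G) (@piQ1 K G)).
congr (_ * _); apply: eq_bigr => i _.
by rewrite pp_dot' !pp_nth /dot /anti.
Qed.
End Dsec.

End Aux.

Theorem mainTheorem9 (K : fieldType) (G : groupType)
  (hchar : [pchar K] =i pred0)
  (x y z w u v s t : KG K G) :
  inLambda x -> inLambda y -> inLambda z -> inLambda w ->
  inLambda u -> inLambda v -> inLambda s -> inLambda t ->
  inI (kg_det4 (fun i j => kg_dot (nth [::] [:: x; y; z; w] i)
                                  (nth [::] [:: u; v; s; t] j))).
Proof. exact: Aux.main_sec. Qed.
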